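(* Let $H^{(2)}_n=\sum_{0<j\leqslant n}1/j^2$ for $n=0,1,2,\ldots$ (so $H^{(2)}_0=0$), and let $(F_n)_{n\geqslant0}$, $(L_n)_{n\geqslant0}$ be the Fibonacci and Lucas numbers. For $k\geqslant0$ define $$u_k=\begin{cases}5^{k/2}F_k & \text{if } 2\mid k,\\ 5^{(k-1)/2}L_k & \text{if } 2\nmid k,\end{cases}\qquad v_k=\begin{cases}5^{k/2}L_k & \text{if } 2\mid k,\\ 5^{(k+1)/2}F_k & \text{if } 2\nmid k.\end{cases}$$ Then: (i) $$\sum_{k=1}^\infty\frac{H_{k-1}^{(2)}}{k^2\binom{2k}k}=\frac{\pi^4}{1944},$$ $$\sum_{k=1}^\infty\frac{L_{2k}H_{k-1}^{(2)}}{k^2\binom{2k}k}=\frac{41\pi^4}{7500},\qquad \sum_{k=1}^\infty\frac{F_{2k}H_{k-1}^{(2)}}{k^2\binom{2k}k}=\frac{2\pi^4}{375\sqrt5},$$ $$\sum_{k=1}^\infty\frac{v_kH_{k-1}^{(2)}}{k^2\binom{2k}k}=\frac{34\pi^4}{1875},\qquad \sum_{k=1}^\infty\frac{u_kH_{k-1}^{(2)}}{k^2\binom{2k}k}=\frac{2\pi^4}{125\sqrt5}.$$ (ii) For every real $x$ with $0\leqslant x<4$, $$\sum_{k=1}^\infty\frac{H_{k-1}^{(2)}x^k}{k\binom{2k}k}=\frac43\sqrt{\frac{x}{4-x}}\,\arcsin^3\frac{\sqrt x}2.$$ In particular, $$\sum_{k=1}^\infty\frac{H_{k-1}^{(2)}}{k\binom{2k}k}=\frac{\pi^3}{162\sqrt3}\qquad\text{and}\qquad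 \sum_{k=1}^\infty\frac{3^kH_{k-1}^{(2)}}{k\binom{2k}k}=\frac{4\pi^3}{27\sqrt3}.$$
   Context: Fibonacci numbers: $F_0=0$, $F_1=1$, $F_{n+1}=F_n+F_{n-1}$ for $n\geqslant1$. Lucas numbers: $L_0=2$, $L_1=1$, $L_{n+1}=L_n+L_{n-1}$ for $n\geqslant1$. $H^{(2)}_n$ is the second-order harmonic number $\sum_{0<j\leqslant n}1/j^2$. *)

(* Defs.v *)
From Stdlib Require Import Reals Lra Lia.
From Coquelicot Require Import Coquelicot.
Open Scope R_scope.

Fixpoint fib (n : nat) : nat :=
  match n with
  | O => 0%nat
  | S m => match m with
           | O => 1%nat
           | S p => (fib m + fib p)%nat
           end
  end.

Fixpoint lucas (n : nat) : nat :=
  match n with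
  | O => 2%nat
  | S m => match m with
           | O => 1%nat
           | S p => (lucas m + lucas p)%nat
           end
  end.

Fixpoint H2 (n : nat) : R :=
  match n with
  | O => 0
  | S m => H2 m + 1 / (INR (S m))^2
  end.

Definition cbin (k : nat) : R := Binomial.C (2 * k) k.

Definition u_seq (k : nat) : R :=
  if Nat.even k then 5 ^ (k / 2) * INR (fib k)
  else 5 ^ ((k - 1) / 2) * INR (lucas k).

Definition v_seq (k : nat) : R :=
  if Nat.even k then 5 ^ (k / 2) * INR (lucas k)
  else 5 ^ ((k + 1) / 2) * INR (fib k).

Definition sum_from1_is (a : nat -> R) (l : R) : Prop :=
  is_series (fun n : nat => a (S n)) l.

(* Main.v *)
Require Import Defs.
From Stdlib Require Import Reals Lra Lia.
From Coquelicot Require Import Coquelicot.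
From Stdlib Require Import Factorial.
Open Scope R_scope.

Lemma cbin_eq k : cbin k = INR (fact (2 * k)) / (INR (fact k) * INR (fact k)).
Proof. unfold cbin, Binomial.C. replace (2 * k - k)%nat with k by lia. reflexivity. Qed.

Lemma fact_pos' n : 0 < INR (fact n).
Proof. apply lt_0_INR, lt_O_fact. Qed.

Lemma cbin_pos k : 0 < cbin k.
Proof. rewrite cbin_eq. pose proof (fact_pos' (2*k)); pose proof (fact_pos' k).
  apply Rdiv_lt_0_compat; auto; nra. Qed.

Lemma cbin_S k : cbin (S k) = 2 * (2 * INR k + 1) / (INR k + 1) * cbin k.
Proof.
  rewrite !cbin_eq. replace (2 * S k)%nat with (S (S (2 * k))) by lia.
  rewrite !fact_simpl, !mult_INR, !S_INR, mult_INR.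
  pose proof (fact_pos' (2*k)); pose proof (fact_pos' k). pose proof (pos_INR k).
  simpl. field. repeat split; lra.
Qed.

Lemma cbin_ge k : 4 ^ k <= (2 * INR k + 1) * cbin k.
Proof.
  induction k.
  - unfold cbin, Binomial.C. simpl. lra.
  - rewrite cbin_S, S_INR. pose proof (pos_INR k). pose proof (cbin_pos k).
    simpl pow.
    apply Rle_trans with ((4 * (2 * INR k + 1)) * cbin k); [nra|].
    apply Rle_trans with (((2 * (INR k + 1) + 1) * (2 * (2 * INR k + 1) / (INR k + 1))) * cbin k);
      [| right; field; lra].
    apply Rmult_le_compat_r; [lra|].
    apply Rmult_le_reg_r with (INR k + 1); [lra|].
    replace ((2 * (INR k + 1) + 1) * (2 * (2 * INR k + 1) / (INR k + 1)) * (INR k + 1))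
      with ((2 * (INR k + 1) + 1) * (2 * (2 * INR k + 1))) by (field; lra).
    nra.
Qed.

Lemma H2_le n : H2 n <= INR n.
Proof.
  induction n. simpl; lra. change (H2 (S n)) with (H2 n + 1 / INR (S n) ^ 2).
  rewrite S_INR. assert (1 / (INR n + 1) ^ 2 <= 1).
  { pose proof (pos_INR n). apply Rmult_le_reg_r with ((INR n + 1)^2).
    nra. unfold Rdiv. rewrite Rmult_assoc, Rinv_l; nra. }
  lra.
Qed.

Lemma H2_ge0 n : 0 <= H2 n.
Proof. induction n. simpl; lra. change (H2 (S n)) with (H2 n + 1 / INR (S n) ^ 2). assert (0 < 1 / INR (S n) ^ 2).
  { apply Rdiv_lt_0_compat; [lra|]. apply pow_lt, lt_0_INR; lia. } lra. Qed.

Lemma rad_ge4 (a : nat -> R) M : (forall n, Rabs (a n * 4 ^ n) <= M) -> Rbar_le 4 (CV_radius a).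
Proof.
  intros HM. destruct (CV_radius_bounded a) as [Hub _]. apply Hub. exists M; auto.
Qed.
Lemma x_lt4 t : -(PI/2) < t < PI/2 -> Rabs (4 * sin t ^ 2) < 4.
Proof.
  intros Ht. pose proof (cos_gt_0 t (proj1 Ht) (proj2 Ht)).
  pose proof (sin2_cos2 t). unfold Rsqr in H0.
  rewrite Rabs_right; nra.
Qed.

Lemma dx t : is_derive (fun t => 4 * sin t ^ 2) t (8 * sin t * cos t).
Proof. auto_derive; [auto | ring]. Qed.

Lemma is_derive_val (f : R -> R) x l l' : is_derive f x l -> l = l' -> is_derive f x l'.
Proof. intros H E; subst; auto. Qed.

Lemma deriv1 c t : Rbar_le 4 (CV_radius c) -> -(PI/2) < t < PI/2 ->
  is_derive (fun t => PSeries c (4 * sin t ^ 2)) t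
    (PSeries (PS_derive c) (4 * sin t ^ 2) * (8 * sin t * cos t)).
Proof.
  intros Hr Ht.
  assert (Hx : Rbar_lt (Rabs (4 * sin t ^ 2)) (CV_radius c)).
  { eapply Rbar_lt_le_trans; [ | exact Hr]. simpl. apply x_lt4; auto. }
  pose proof (is_derive_comp (PSeries c) (fun t => 4 * sin t ^ 2) t _ _
     (is_derive_PSeries c _ Hx) (dx t)) as H.
  eapply is_derive_val; [exact H | ]. unfold scal; simpl; unfold mult; simpl. ring.
Qed.
Definition Ld (c : nat -> R) (n : nat) : R :=
  2 * (INR n + 1) * (2 * INR n + 1) * c (S n) - INR n ^ 2 * c n.

Ltac exps := match goal with
 | |- ex_pseries (PS_minus _ _) _ => apply ex_pseries_minus; exps
 | |- ex_pseries (PS_plus _ _) _ => apply ex_pseries_plus; exps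
 | |- ex_pseries (PS_incr_1 _) _ => apply ex_pseries_incr_1; exps
 | |- ex_pseries (PS_scal _ _) _ => apply ex_pseries_scal; [apply Rmult_comm | exps]
 | _ => assumption end.

Lemma Lcoef c x : Rbar_lt (Rabs x) (CV_radius c) ->
  (2 - x) * PSeries (PS_derive c) x + x * (4 - x) * PSeries (PS_derive (PS_derive c)) x
  = PSeries (Ld c) x.
Proof.
  intros Hx.
  set (a1 := PS_derive c). set (a2 := PS_derive a1).
  assert (e1 : ex_pseries a1 x).
  { apply CV_radius_inside. unfold a1. rewrite CV_radius_derive. auto. }
  assert (e2 : ex_pseries a2 x).
  { apply CV_radius_inside. unfold a2, a1. rewrite !CV_radius_derive. auto. }
  assert (E : PSeries (Ld c) x = PSeries (PS_plus (PS_minus (PS_scal 2 a1) (PS_incr_1 a1))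
      (PS_minus (PS_scal 4 (PS_incr_1 a2)) (PS_incr_1 (PS_incr_1 a2)))) x).
  { apply PSeries_ext. intros n. unfold PS_plus, PS_minus, PS_opp, PS_scal, Ld, a2, a1, PS_derive.
    destruct n as [|[|n]]; cbn -[INR]; unfold plus, opp, scal, zero, mult; cbn -[INR];
     rewrite ?S_INR; simpl; ring. }
  rewrite E. rewrite PSeries_plus; [ | exps | exps].
  rewrite !PSeries_minus; try exps.
  rewrite !PSeries_scal, !PSeries_incr_1. ring.
Qed.

Lemma dsc t : is_derive (fun t => 8 * sin t * cos t) t (8 * (cos t ^ 2 - sin t ^ 2)).
Proof. auto_derive; [auto | ring]. Qed.

Lemma deriv2 c t : Rbar_le 4 (CV_radius c) -> -(PI/2) < t < PI/2 ->
  is_derive (fun t => PSeries (PS_derive c) (4 * sin t ^ 2) * (8 * sin t * cos t)) t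
    (4 * PSeries (Ld c) (4 * sin t ^ 2)).
Proof.
  intros Hr Ht.
  assert (Hr' : Rbar_le 4 (CV_radius (PS_derive c))) by (rewrite CV_radius_derive; auto).
  pose proof (is_derive_mult _ _ t _ _ (deriv1 _ t Hr' Ht) (dsc t) Rmult_comm) as H.
  eapply is_derive_val; [exact H | ].
  assert (Hx : Rbar_lt (Rabs (4 * sin t ^ 2)) (CV_radius c)).
  { eapply Rbar_lt_le_trans; [ | exact Hr]. simpl. apply x_lt4; auto. }
  rewrite <- (Lcoef c _ Hx).
  unfold plus, mult; cbn -[pow PSeries sin cos].
  assert (Hc : cos t ^ 2 = 1 - sin t ^ 2).
  { pose proof (sin2_cos2 t). unfold Rsqr in H0. lra. }
  transitivity (PSeries (PS_derive (PS_derive c)) (4 * sin t ^ 2) * (64 * sin t ^ 2 * cos t ^ 2) +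
     PSeries (PS_derive c) (4 * sin t ^ 2) * (8 * (cos t ^ 2 - sin t ^ 2))); [ring | ].
  rewrite Hc. ring.
Qed.

Lemma const_on (g : R -> R) (a : R) :
  (forall t, -a < t < a -> is_derive g t 0) -> forall t, -a < t < a -> g t = g 0.
Proof.
  intros Hd t Ht.
  destruct (MVT_gen g 0 t (fun _ => 0)) as [c [_ Hc]].
  - intros x Hx. apply Hd. unfold Rmin, Rmax in Hx.
    destruct (Rle_dec 0 t); lra.
  - intros x Hx. apply continuity_pt_filterlim. apply (ex_derive_continuous (K:=R_AbsRing) (V:=R_NormedModule)).
    eexists. apply Hd. unfold Rmin, Rmax in Hx. destruct (Rle_dec 0 t); lra.
  - lra.
Qed.

Lemma is_derive_minusR (f g : R -> R) x df dg :
  is_derive f x df -> is_derive g x dg -> is_derive (fun t => f t - g t) x (df - dg).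
Proof. intros A B. apply (is_derive_minus f g x df dg A B). Qed.

Lemma uniq2 (f f1 F F1 h : R -> R) (a : R) :
  (forall t, -a < t < a -> is_derive f t (f1 t) /\ is_derive f1 t (h t)
     /\ is_derive F t (F1 t) /\ is_derive F1 t (h t)) ->
  f 0 = F 0 -> f1 0 = F1 0 ->
  forall t, -a < t < a -> f t = F t /\ f1 t = F1 t.
Proof.
  intros Hd H0 H1.
  assert (E1 : forall t, -a < t < a -> f1 t - F1 t = f1 0 - F1 0).
  { apply (const_on (fun t => f1 t - F1 t)). intros t Ht.
    destruct (Hd t Ht) as (_ & A & _ & B).
    replace 0 with (h t - h t) by ring. apply is_derive_minusR; auto. }
  assert (E2 : forall t, -a < t < a -> f t - F t = f 0 - F 0).
  { apply (const_on (fun t => f t - F t)). intros t Ht.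
    destruct (Hd t Ht) as (A & _ & B & _).
    replace 0 with (f1 t - F1 t) by (rewrite E1; auto; lra).
    apply is_derive_minusR; auto. }
  intros t Ht. specialize (E1 t Ht). specialize (E2 t Ht). lra.
Qed.

Definition cA (n : nat) : R := H2 (n - 1) / (INR n ^ 2 * cbin n).
Definition cQ (n : nat) : R := / (2 * INR n ^ 2 * cbin n).

Lemma cA0 : cA 0 = 0.
Proof. unfold cA. replace (INR 0 ^ 2 * cbin 0) with 0 by (simpl; ring). unfold Rdiv. rewrite Rinv_0. ring. Qed.
Lemma cQ0 : cQ 0 = 0.
Proof. unfold cQ. replace (2 * INR 0 ^ 2 * cbin 0) with 0 by (simpl; ring). apply Rinv_0. Qed.
Lemma cbin0 : cbin 0 = 1.
Proof. unfold cbin, Binomial.C. simpl. field. Qed.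

Lemma cA_bound n : Rabs (cA n * 4 ^ n) <= 3.
Proof.
  destruct n as [|m]. rewrite cA0, Rmult_0_l, Rabs_R0; lra.
  unfold cA. replace (S m - 1)%nat with m by lia.
  pose proof (cbin_ge (S m)) as G1. pose proof (cbin_pos (S m)) as G2. pose proof (H2_le m) as G3.
  pose proof (H2_ge0 m) as G4. rewrite S_INR in *. pose proof (pos_INR m).
  assert (0 < 4 ^ S m) by (apply pow_lt; lra).
  rewrite Rabs_right.
  2: { apply Rle_ge. unfold Rdiv. apply Rmult_le_pos; [apply Rmult_le_pos|]; try lra.
       apply Rlt_le, Rinv_0_lt_compat. nra. }
  apply Rle_trans with ((INR m + 1) * ((2 * (INR m + 1) + 1) * cbin (S m)) / ((INR m + 1) ^ 2 * cbin (S m))).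
  - replace (H2 m / ((INR m + 1) ^ 2 * cbin (S m)) * 4 ^ S m) with
      (H2 m * 4 ^ S m / ((INR m + 1) ^ 2 * cbin (S m))) by (field; nra).
    unfold Rdiv. apply Rmult_le_compat_r. apply Rlt_le, Rinv_0_lt_compat; nra.
    apply Rmult_le_compat; lra.
  - replace ((INR m + 1) * ((2 * (INR m + 1) + 1) * cbin (S m)) / ((INR m + 1) ^ 2 * cbin (S m)))
      with ((2 * (INR m + 1) + 1) / (INR m + 1)) by (field; lra).
    apply Rmult_le_reg_r with (INR m + 1); [lra|]. unfold Rdiv.
    rewrite Rmult_assoc, Rinv_l; lra.
Qed.

Lemma cQ_bound n : Rabs (cQ n * 4 ^ n) <= 3.
Proof.
  destruct n as [|m]. rewrite cQ0, Rmult_0_l, Rabs_R0; lra.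
  unfold cQ.
  pose proof (cbin_ge (S m)). pose proof (cbin_pos (S m)).
  rewrite S_INR in *. pose proof (pos_INR m).
  assert (0 < 4 ^ S m) by (apply pow_lt; lra).
  rewrite Rabs_right.
  2: { apply Rle_ge. apply Rmult_le_pos; try lra. apply Rlt_le, Rinv_0_lt_compat. nra. }
  apply Rle_trans with (((2 * (INR m + 1) + 1) * cbin (S m)) / (2 * (INR m + 1) ^ 2 * cbin (S m))).
  - unfold Rdiv. rewrite Rmult_comm.
    apply Rmult_le_compat_r. apply Rlt_le, Rinv_0_lt_compat; nra. lra.
  - replace (((2 * (INR m + 1) + 1) * cbin (S m)) / (2 * (INR m + 1) ^ 2 * cbin (S m)))
      with ((2 * (INR m + 1) + 1) / (2 * (INR m + 1) ^ 2)) by (field; lra).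
    apply Rmult_le_reg_r with (2 * (INR m + 1) ^ 2); [nra|]. unfold Rdiv.
    rewrite Rmult_assoc, Rinv_l; nra.
Qed.

Lemma radA : Rbar_le 4 (CV_radius cA).
Proof. apply (rad_ge4 _ 3), cA_bound. Qed.
Lemma radQ : Rbar_le 4 (CV_radius cQ).
Proof. apply (rad_ge4 _ 3), cQ_bound. Qed.

Lemma LdA n : Ld cA n = 2 * cQ n.
Proof.
  destruct n as [|m].
  - unfold Ld. rewrite cQ0. unfold cA. simpl. unfold Rdiv. ring.
  - unfold Ld, cA, cQ. replace (S (S m) - 1)%nat with (S m) by lia.
    replace (S m - 1)%nat with m by lia.
    rewrite (cbin_S (S m)).
    change (H2 (S m)) with (H2 m + 1 / INR (S m) ^ 2).
    pose proof (cbin_pos (S m)). rewrite !S_INR. pose proof (pos_INR m).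
    field. repeat split; lra.
Qed.

Lemma LdQ n : Ld cQ n = if Nat.eqb n 0 then 1/2 else 0.
Proof.
  destruct n as [|m].
  - unfold Ld. rewrite cQ0. unfold cQ. rewrite (cbin_S 0), cbin0. simpl. field.
  - unfold Ld, cQ. simpl Nat.eqb.
    rewrite (cbin_S (S m)).
    pose proof (cbin_pos (S m)). rewrite !S_INR. pose proof (pos_INR m).
    field. repeat split; lra.
Qed.

Lemma PS_LdQ x : Rabs x < 4 -> PSeries (Ld cQ) x = 1/2.
Proof.
  intros Hx.
  rewrite (PSeries_ext _ (fun n => if Nat.eqb n 0 then 1/2 else 0)) by apply LdQ.
  rewrite PSeries_decr_1.
  - rewrite (PSeries_ext _ (fun _ => 0)) by (intros; reflexivity).
    rewrite PSeries_const_0. simpl. ring.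
  - apply CV_radius_inside. eapply Rbar_lt_le_trans; [ | apply (rad_ge4 _ 1)]. simpl; auto.
    intros n. destruct n; simpl; rewrite ?Rmult_0_l, ?Rabs_R0, ?Rmult_1_r; try lra.
    rewrite Rabs_right; lra.
Qed.

Lemma mainQ t : -(PI/2) < t < PI/2 ->
  PSeries cQ (4 * sin t ^ 2) = t ^ 2 /\
  PSeries (PS_derive cQ) (4 * sin t ^ 2) * (8 * sin t * cos t) = 2 * t.
Proof.
  apply (uniq2 (fun t => PSeries cQ (4 * sin t ^ 2))
     (fun t => PSeries (PS_derive cQ) (4 * sin t ^ 2) * (8 * sin t * cos t))
     (fun t => t ^ 2) (fun t => 2 * t) (fun _ => 2) (PI/2)).
  - intros s Hs. assert (Hs' : -(PI/2) < s < PI/2) by lra. split; [|split; [|split]].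
    + apply deriv1; auto using radQ.
    + eapply is_derive_val. apply deriv2; auto using radQ.
      rewrite PS_LdQ by (apply x_lt4; auto). change (@eq R (4*(1/2)) 2); field.
    + auto_derive; auto; ring.
    + auto_derive; auto; ring.
  - rewrite sin_0. replace (4 * 0 ^ 2) with 0 by ring. rewrite PSeries_0, cQ0. ring.
  - rewrite sin_0. ring.
Qed.

Lemma mainA t : -(PI/2) < t < PI/2 ->
  PSeries cA (4 * sin t ^ 2) = 2 / 3 * t ^ 4 /\
  PSeries (PS_derive cA) (4 * sin t ^ 2) * (8 * sin t * cos t) = 8 / 3 * t ^ 3.
Proof.
  apply (uniq2 (fun t => PSeries cA (4 * sin t ^ 2))
     (fun t => PSeries (PS_derive cA) (4 * sin t ^ 2) * (8 * sin t * cos t))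
     (fun t => 2 / 3 * t ^ 4) (fun t => 8 / 3 * t ^ 3) (fun t => 8 * t ^ 2) (PI/2)).
  - intros s Hs. assert (Hs' : -(PI/2) < s < PI/2) by lra. split; [|split; [|split]].
    + apply deriv1; auto using radA.
    + eapply is_derive_val. apply deriv2; auto using radA.
      rewrite (PSeries_ext _ (PS_scal 2 cQ)) by apply LdA.
      rewrite PSeries_scal. rewrite (proj1 (mainQ s Hs')). change (@eq R (4 * (2 * s^2)) (8 * s^2)); ring.
    + auto_derive; auto; field.
    + auto_derive; auto; field.
  - rewrite sin_0. replace (4 * 0 ^ 2) with 0 by ring. rewrite PSeries_0, cA0. ring.
  - rewrite sin_0. ring.
Qed.

Definition s5 := sqrt 5.
Lemma s5sq : s5 * s5 = 5.
Proof. unfold s5. apply sqrt_sqrt. lra. Qed.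
Lemma s5pos : 0 < s5.
Proof. unfold s5. apply sqrt_lt_R0. lra. Qed.
Lemma s5gt2 : 2 < s5.
Proof. pose proof s5sq; pose proof s5pos. nra. Qed.
Definition phi := (1 + s5) / 2.
Definition psi := (1 - s5) / 2.

Lemma binet2 n : (INR (fib n) = (phi ^ n - psi ^ n) / s5 /\ INR (lucas n) = phi ^ n + psi ^ n)
           /\ (INR (fib (S n)) = (phi ^ S n - psi ^ S n) / s5 /\ INR (lucas (S n)) = phi ^ S n + psi ^ S n).
Proof.
  pose proof s5sq; pose proof s5pos.
  induction n as [|n IH].
  - unfold phi, psi; simpl. repeat split; field; lra.
  - destruct IH as [[F1 L1] [F2 L2]]. split; [split; auto|].
    change (fib (S (S n))) with (fib (S n) + fib n)%nat.
    change (lucas (S (S n))) with (lucas (S n) + lucas n)%nat.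
    rewrite !plus_INR, F1, F2, L1, L2.
    assert (Hp : phi ^ 2 = phi + 1) by (unfold phi; nra).
    assert (Hq : psi ^ 2 = psi + 1) by (unfold psi; nra).
    replace (phi ^ S (S n)) with (phi ^ n * phi ^ 2) by (simpl; ring).
    replace (psi ^ S (S n)) with (psi ^ n * psi ^ 2) by (simpl; ring).
    rewrite Hp, Hq. simpl. split; field; lra.
Qed.

Lemma fibR n : INR (fib n) = (phi ^ n - psi ^ n) / s5.
Proof. apply binet2. Qed.
Lemma lucR n : INR (lucas n) = phi ^ n + psi ^ n.
Proof. apply binet2. Qed.

Lemma cos_PI5 : cos (PI / 5) = phi / 2.
Proof.
  set (c := cos (PI/5)).
  assert (Hc : 0 < c) by (apply cos_gt_0; pose proof PI_RGT_0; lra).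
  assert (Hsc : sin (PI/5) ^ 2 = 1 - c ^ 2) by (pose proof (sin2_cos2 (PI/5)); unfold Rsqr in H; unfold c; nra).
  assert (E : cos (PI - 2 * (PI / 5)) = cos (2 * (PI/5) + PI/5)) by (f_equal; field).
  rewrite Rtrigo_facts.cos_pi_minus, cos_plus, cos_2a_cos, sin_2a in E. fold c in E.
  assert (E2 : 4 * c ^ 2 - 2 * c - 1 = 0).
  { assert ((c + 1) * (4 * c ^ 2 - 2 * c - 1) = 0) by nra.
    apply Rmult_integral in H. destruct H; lra. }
  pose proof s5sq; pose proof s5pos.
  unfold phi. assert ((4 * c - 1 - s5) * (4 * c - 1 + s5) = 0) by nra.
  apply Rmult_integral in H1. destruct H1; nra.
Qed.

Lemma sin_sq_cos t : sin t ^ 2 = 1 - cos t ^ 2.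
Proof. pose proof (sin2_cos2 t). unfold Rsqr in H. nra. Qed.

Lemma angY1 : 4 * sin (3 * PI / 10) ^ 2 = phi ^ 2.
Proof.
  rewrite <- cos_shift. replace (PI / 2 - 3 * PI / 10) with (PI / 5) by field.
  rewrite cos_PI5. field.
Qed.

Lemma cos2PI5 : cos (2 * PI / 5) = - psi / 2.
Proof.
  replace (2 * PI / 5) with (2 * (PI / 5)) by field. rewrite cos_2a_cos, cos_PI5.
  pose proof s5sq. unfold phi, psi. nra.
Qed.

Lemma angY2 : 4 * sin (PI / 10) ^ 2 = psi ^ 2.
Proof.
  rewrite <- cos_shift. replace (PI / 2 - PI / 10) with (2 * PI / 5) by field.
  rewrite cos2PI5. field.
Qed.

Lemma angX1 : 4 * sin (2 * PI / 5) ^ 2 = s5 * phi.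
Proof.
  rewrite sin_sq_cos, cos2PI5. pose proof s5sq. unfold phi, psi. nra.
Qed.

Lemma angX2 : 4 * sin (PI / 5) ^ 2 = - (s5 * psi).
Proof.
  rewrite sin_sq_cos, cos_PI5. pose proof s5sq. unfold phi, psi. nra.
Qed.

Lemma s5pow_even m : s5 ^ (2 * m) = 5 ^ m.
Proof. rewrite pow_mult. f_equal. simpl. rewrite Rmult_1_r. apply s5sq. Qed.

Lemma v_eq k : v_seq k = (s5 * phi) ^ k + (- (s5 * psi)) ^ k.
Proof.
  unfold v_seq. destruct (Nat.even k) eqn:E.
  - apply Nat.even_spec in E. destruct E as [m ->].
    replace (2 * m / 2)%nat with m by (rewrite Nat.mul_comm, Nat.div_mul; lia).
    rewrite lucR. replace (- (s5 * psi)) with (s5 * (- psi)) by ring.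
    rewrite !Rpow_mult_distr, s5pow_even.
    replace ((- psi) ^ (2 * m)) with (psi ^ (2 * m)).
    ring. rewrite !pow_mult. f_equal. ring.
  - assert (O : Nat.odd k = true) by (rewrite <- Nat.negb_even, E; reflexivity).
    apply Nat.odd_spec in O. destruct O as [m ->].
    replace ((2 * m + 1 + 1) / 2)%nat with (S m) by
      (replace (2 * m + 1 + 1)%nat with (S m * 2)%nat by lia; rewrite Nat.div_mul; lia).
    rewrite fibR. replace (- (s5 * psi)) with (s5 * (- psi)) by ring.
    rewrite !Rpow_mult_distr, !pow_add, s5pow_even.
    replace ((- psi) ^ (2 * m)) with (psi ^ (2 * m)) by (rewrite !pow_mult; f_equal; ring).
    pose proof s5sq; pose proof s5pos. simpl. rewrite <- H. field. lra.
Qed.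

Lemma u_eq k : u_seq k = ((s5 * phi) ^ k - (- (s5 * psi)) ^ k) / s5.
Proof.
  pose proof s5sq; pose proof s5pos.
  unfold u_seq. destruct (Nat.even k) eqn:E.
  - apply Nat.even_spec in E. destruct E as [m ->].
    replace (2 * m / 2)%nat with m by (rewrite Nat.mul_comm, Nat.div_mul; lia).
    rewrite fibR. replace (- (s5 * psi)) with (s5 * (- psi)) by ring.
    rewrite !Rpow_mult_distr, s5pow_even.
    replace ((- psi) ^ (2 * m)) with (psi ^ (2 * m)).
    field. lra. rewrite !pow_mult. f_equal. ring.
  - assert (O : Nat.odd k = true) by (rewrite <- Nat.negb_even, E; reflexivity).
    apply Nat.odd_spec in O. destruct O as [m ->].
    replace ((2 * m + 1 - 1) / 2)%nat with m by
      (replace (2 * m + 1 - 1)%nat with (m * 2)%nat by lia; rewrite Nat.div_mul; lia).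
    rewrite lucR. replace (- (s5 * psi)) with (s5 * (- psi)) by ring.
    rewrite !Rpow_mult_distr, !pow_add, s5pow_even.
    replace ((- psi) ^ (2 * m)) with (psi ^ (2 * m)) by (rewrite !pow_mult; f_equal; ring).
    simpl. field. lra.
Qed.

Lemma pser_shift (a : nat -> R) x : a 0%nat = 0 -> Rbar_lt (Rabs x) (CV_radius a) ->
  is_series (fun n => a (S n) * x ^ S n) (PSeries a x).
Proof.
  intros H0 Hx.
  pose proof (PSeries_correct a x (CV_radius_inside a x Hx)) as P.
  apply is_pseries_R in P.
  apply (is_series_incr_1 (fun n => a n * x ^ n)).
  rewrite H0. unfold plus; simpl. rewrite Rmult_0_l, Rplus_0_r. exact P.
Qed.

Lemma A_at t X : -(PI/2) < t < PI/2 -> 4 * sin t ^ 2 = X ->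
  is_series (fun n => cA (S n) * X ^ S n) (2 / 3 * t ^ 4).
Proof.
  intros Ht HX. rewrite <- (proj1 (mainA t Ht)), HX.
  apply pser_shift. apply cA0.
  eapply Rbar_lt_le_trans; [ | apply radA]. simpl. rewrite <- HX. apply x_lt4; auto.
Qed.

Lemma B_at t X : -(PI/2) < t < PI/2 -> 4 * sin t ^ 2 = X ->
  is_series (fun n => H2 n * X ^ S n / (INR (S n) * cbin (S n)))
    (4 / 3 * (sin t / cos t) * t ^ 3).
Proof.
  intros Ht HX.
  assert (Hc : 0 < cos t) by (apply cos_gt_0; lra).
  assert (Hx : Rbar_lt (Rabs X) (CV_radius (PS_derive cA))).
  { rewrite CV_radius_derive.
    eapply Rbar_lt_le_trans; [ | apply radA]. simpl. rewrite <- HX. apply x_lt4; auto. }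
  pose proof (PSeries_correct _ X (CV_radius_inside _ X Hx)) as P.
  apply is_pseries_R in P.
  apply (is_series_scal X) in P.
  replace (4 / 3 * (sin t / cos t) * t ^ 3) with (scal X (PSeries (PS_derive cA) X)).
  - eapply is_series_ext; [ | exact P]. intros n. unfold scal; cbn -[INR pow PSeries sin cos]; unfold mult; cbn -[INR pow PSeries sin cos].
    unfold PS_derive, cA. replace (S n - 1)%nat with n by lia.
    pose proof (cbin_pos (S n)). pose proof (pos_INR n). rewrite S_INR.
    rewrite <- (tech_pow_Rmult X n). field. lra.
  - pose proof (proj2 (mainA t Ht)) as M. change (@eq R (X * PSeries (PS_derive cA) X) (4 / 3 * (sin t / cos t) * t ^ 3)).
    rewrite <- HX.
    apply Rmult_eq_reg_r with (2 * cos t); [ | lra].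
    transitivity (sin t * (PSeries (PS_derive cA) (4 * sin t ^ 2) * (8 * sin t * cos t))).
    ring. rewrite M. field. lra.
Qed.

Ltac toR := match goal with |- ?a = ?b => change (@eq R a b) end.

Lemma is_series_plusR (a b : nat -> R) la lb : is_series a la -> is_series b lb ->
  is_series (fun n => a n + b n) (la + lb).
Proof. intros A B. apply (is_series_plus a b la lb A B). Qed.
Lemma is_series_minusR (a b : nat -> R) la lb : is_series a la -> is_series b lb ->
  is_series (fun n => a n - b n) (la - lb).
Proof. intros A B. apply (is_series_minus a b la lb A B). Qed.
Lemma is_series_scalR c (a : nat -> R) l : is_series a l -> is_series (fun n => c * a n) (c * l).
Proof. intros A. apply (is_series_scal c a l A). Qed.
Lemma is_series_extR (a b : nat -> R) l : (forall n, a n = b n) -> is_series a l -> is_series b l.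
Proof. intros E A. apply (is_series_ext a b l E A). Qed.

Lemma PIpos : 0 < PI. Proof. apply PI_RGT_0. Qed.

Lemma part1 : sum_from1_is (fun k => H2 (k - 1) / ((INR k)^2 * cbin k)) (PI^4 / 1944).
Proof.
  unfold sum_from1_is. replace (PI^4/1944) with (2/3*(PI/6)^4) by field.
  eapply is_series_ext; [ | apply (A_at (PI/6) 1)].
  - intros n. toR. unfold cA. rewrite pow1. ring.
  - pose proof PIpos; lra.
  - rewrite sin_PI6. field.
Qed.

Lemma part2 : sum_from1_is (fun k => INR (lucas (2 * k)) * H2 (k - 1) / ((INR k)^2 * cbin k))
        (41 * PI^4 / 7500).
Proof.
  unfold sum_from1_is. pose proof PIpos.
  replace (41 * PI^4 / 7500) with ((2/3*(3*PI/10)^4) + (2/3*(PI/10)^4)) by field.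
  eapply is_series_extR; [ | apply is_series_plusR; [apply (A_at (3*PI/10) (phi^2)) | apply (A_at (PI/10) (psi^2))]].
  - intros n. unfold cA. rewrite lucR, !pow_mult. field.
    pose proof (cbin_pos (S n)). rewrite S_INR. pose proof (pos_INR n). split; lra.
  - lra.
  - apply angY1.
  - lra.
  - apply angY2.
Qed.

Lemma s5ne : s5 <> 0.
Proof. pose proof s5pos; lra. Qed.

Lemma part3 : sum_from1_is (fun k => INR (fib (2 * k)) * H2 (k - 1) / ((INR k)^2 * cbin k))
        (2 * PI^4 / (375 * sqrt 5)).
Proof.
  unfold sum_from1_is. pose proof PIpos. pose proof s5ne.
  replace (2 * PI^4 / (375 * sqrt 5)) with (/ s5 * ((2/3*(3*PI/10)^4) - (2/3*(PI/10)^4)))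
    by (unfold s5 in *; field; auto).
  eapply is_series_extR; [ | apply is_series_scalR, is_series_minusR; [apply (A_at (3*PI/10) (phi^2)) | apply (A_at (PI/10) (psi^2))]].
  - intros n. unfold cA. rewrite fibR, !pow_mult. field.
    pose proof (cbin_pos (S n)). rewrite S_INR. pose proof (pos_INR n). repeat split; lra.
  - lra.
  - apply angY1.
  - lra.
  - apply angY2.
Qed.

Lemma part4 : sum_from1_is (fun k => v_seq k * H2 (k - 1) / ((INR k)^2 * cbin k))
        (34 * PI^4 / 1875).
Proof.
  unfold sum_from1_is. pose proof PIpos.
  replace (34 * PI^4 / 1875) with ((2/3*(2*PI/5)^4) + (2/3*(PI/5)^4)) by field.
  eapply is_series_extR; [ | apply is_series_plusR; [apply (A_at (2*PI/5) (s5*phi)) | apply (A_at (PI/5) (-(s5*psi)))]].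
  - intros n. unfold cA. rewrite v_eq. field.
    pose proof (cbin_pos (S n)). rewrite S_INR. pose proof (pos_INR n). split; lra.
  - lra.
  - apply angX1.
  - lra.
  - apply angX2.
Qed.

Lemma part5 : sum_from1_is (fun k => u_seq k * H2 (k - 1) / ((INR k)^2 * cbin k))
        (2 * PI^4 / (125 * sqrt 5)).
Proof.
  unfold sum_from1_is. pose proof PIpos. pose proof s5ne.
  replace (2 * PI^4 / (125 * sqrt 5)) with (/ s5 * ((2/3*(2*PI/5)^4) - (2/3*(PI/5)^4)))
    by (unfold s5 in *; field; auto).
  eapply is_series_extR; [ | apply is_series_scalR, is_series_minusR; [apply (A_at (2*PI/5) (s5*phi)) | apply (A_at (PI/5) (-(s5*psi)))]].
  - intros n. unfold cA. rewrite u_eq. field.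
    pose proof (cbin_pos (S n)). rewrite S_INR. pose proof (pos_INR n). repeat split; lra.
  - lra.
  - apply angX1.
  - lra.
  - apply angX2.
Qed.

Lemma partB (x : R) : 0 <= x < 4 ->
  sum_from1_is (fun k => H2 (k - 1) * x^k / (INR k * cbin k))
    (4 / 3 * sqrt (x / (4 - x)) * (asin (sqrt x / 2))^3).
Proof.
  intros Hx. unfold sum_from1_is.
  set (a := sqrt x / 2).
  assert (Ha0 : 0 <= a) by (unfold a; pose proof (sqrt_pos x); lra).
  assert (Ha2 : a * a = x / 4) by (unfold a; pose proof (sqrt_sqrt x (proj1 Hx)); nra).
  assert (Ha1 : a < 1) by nra.
  set (t := asin a).
  assert (Hst : sin t = a) by (unfold t; apply sin_asin; lra).
  pose proof (asin_bound a) as Hb. fold t in Hb.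
  assert (Ht : -(PI/2) < t < PI/2).
  { split; destruct Hb as [Hb1 Hb2]; [destruct Hb1 as [Hb1|Hb1] | destruct Hb2 as [Hb2|Hb2]]; auto.
    - exfalso. rewrite <- Hb1 in Hst. rewrite sin_neg, sin_PI2 in Hst. lra.
    - exfalso. rewrite Hb2, sin_PI2 in Hst. lra. }
  assert (Hc : 0 < cos t) by (apply cos_gt_0; lra).
  assert (Hcs : cos t * cos t = 1 - a * a) by (pose proof (sin2_cos2 t); unfold Rsqr in H; rewrite Hst in H; lra).
  replace (sqrt (x / (4 - x))) with (sin t / cos t).
  - eapply is_series_extR; [ | apply (B_at t x Ht)].
    + intros n. replace (S n - 1)%nat with n by lia. reflexivity.
    + rewrite Hst. nra.
  - rewrite Hst. rewrite <- (sqrt_pow2 (a / cos t)).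
    + f_equal. replace x with (4 * (a * a)) by lra.
      replace (4 - 4 * (a * a)) with (4 * (cos t * cos t)) by lra. field. lra.
    + apply Rmult_le_pos; auto. apply Rlt_le, Rinv_0_lt_compat; auto.
Qed.

Lemma partB1 : sum_from1_is (fun k => H2 (k - 1) / (INR k * cbin k)) (PI^3 / (162 * sqrt 3)).
Proof.
  unfold sum_from1_is. pose proof PIpos.
  assert (H3 : sqrt 3 * sqrt 3 = 3) by (apply sqrt_sqrt; lra).
  assert (H3p : 0 < sqrt 3) by (apply sqrt_lt_R0; lra).
  replace (PI^3 / (162 * sqrt 3)) with (4 / 3 * (sin (PI/6) / cos (PI/6)) * (PI/6) ^ 3).
  - eapply is_series_extR; [ | apply (B_at (PI/6) 1)].
    + intros n. replace (S n - 1)%nat with n by lia. rewrite pow1. field.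
      pose proof (cbin_pos (S n)). rewrite S_INR. pose proof (pos_INR n). split; lra.
    + lra.
    + rewrite sin_PI6. field.
  - rewrite sin_PI6, cos_PI6. field_simplify; [| lra | lra].
    field. lra.
Qed.

Lemma partB3 : sum_from1_is (fun k => 3^k * H2 (k - 1) / (INR k * cbin k)) (4 * PI^3 / (27 * sqrt 3)).
Proof.
  unfold sum_from1_is. pose proof PIpos.
  assert (H3 : sqrt 3 * sqrt 3 = 3) by (apply sqrt_sqrt; lra).
  assert (H3p : 0 < sqrt 3) by (apply sqrt_lt_R0; lra).
  replace (4 * PI^3 / (27 * sqrt 3)) with (4 / 3 * (sin (PI/3) / cos (PI/3)) * (PI/3) ^ 3).
  - eapply is_series_extR; [ | apply (B_at (PI/3) 3)].
    + intros n. replace (S n - 1)%nat with n by lia. field.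
      pose proof (cbin_pos (S n)). rewrite S_INR. pose proof (pos_INR n). split; lra.
    + lra.
    + rewrite sin_PI3. replace (4 * (sqrt 3 / 2) ^ 2) with (sqrt 3 * sqrt 3) by field. exact H3.
  - rewrite sin_PI3, cos_PI3. field_simplify; [| lra].
    replace (4 * PI ^ 3 / (27 * sqrt 3)) with (4 * sqrt 3 * PI ^ 3 / (27 * (sqrt 3 * sqrt 3))) by (field; lra). rewrite H3. field.
Qed.
Theorem theorem1p1 :
  (* (i) *)
  (sum_from1_is (fun k => H2 (k - 1) / ((INR k)^2 * cbin k)) (PI^4 / 1944)
   /\ sum_from1_is (fun k => INR (lucas (2 * k)) * H2 (k - 1) / ((INR k)^2 * cbin k))
        (41 * PI^4 / 7500)
   /\ sum_from1_is (fun k => INR (fib (2 * k)) * H2 (k - 1) / ((INR k)^2 * cbin k))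
        (2 * PI^4 / (375 * sqrt 5))
   /\ sum_from1_is (fun k => v_seq k * H2 (k - 1) / ((INR k)^2 * cbin k))
        (34 * PI^4 / 1875)
   /\ sum_from1_is (fun k => u_seq k * H2 (k - 1) / ((INR k)^2 * cbin k))
        (2 * PI^4 / (125 * sqrt 5)))
  /\
  (* (ii) *)
  ((forall x : R, 0 <= x < 4 ->
      sum_from1_is (fun k => H2 (k - 1) * x^k / (INR k * cbin k))
        (4 / 3 * sqrt (x / (4 - x)) * (asin (sqrt x / 2))^3))
   /\ sum_from1_is (fun k => H2 (k - 1) / (INR k * cbin k)) (PI^3 / (162 * sqrt 3))
   /\ sum_from1_is (fun k => 3^k * H2 (k - 1) / (INR k * cbin k))
        (4 * PI^3 / (27 * sqrt 3))).
Proof.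
  split; [repeat split | split; [|split]].
  - apply part1.
  - apply part2.
  - apply part3.
  - apply part4.
  - apply part5.
  - apply partB.
  - apply partB1.
  - apply partB3.
Qed.
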